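(* A finite distributive lattice $\mathcal{L}$ is a tree lattice if and only if it is an honest lattice.
   Context: An element $x$ of $\mathcal{L}$ is join-irreducible if $x = y \vee z$ implies $x = y$ or $x = z$; $J(\mathcal{L})$ is the poset of join-irreducibles with the induced order. $\mathcal{L}$ is a tree lattice if the Hasse diagram of $J(\mathcal{L})$ is a tree. $\mathcal{L}$ is honest if for all $\alpha, \beta \in J(\mathcal{L})$ such that $\alpha$ covers $\beta$ in the poset $J(\mathcal{L})$, $\alpha$ also covers $\beta$ in $\mathcal{L}$ (where $\alpha$ covers $\beta$ means $\alpha > \beta$ and no element lies strictly between them). *)

(* Defs.v *)
From HB Require Import structures.
From mathcomp Require Import all_boot all_order.
Set Implicit Arguments. Unset Strict Implicit. Unset Printing Implicit Defensive.
Import Order.TTheory.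
Local Open Scope order_scope.

Section Defs.
Context {d : Order.disp_t} {T : finTBDistrLatticeType d}.

(* x is join-irreducible: x = y \/ z implies x = y or x = z (literally as in the paper;
   in particular the bottom element is join-irreducible). *)
Definition join_irr (x : T) : bool :=
  [forall y : T, forall z : T, (x == y `|` z) ==> ((x == y) || (x == z))].

Definition covers (x y : T) : bool :=
  (y < x) && [forall z : T, ~~ ((y < z) && (z < x))].

Definition coversJ (x y : T) : bool :=
  [&& join_irr x, join_irr y, y < x &
      [forall z : T, join_irr z ==> ~~ ((y < z) && (z < x))]].

(* undirected Hasse diagram of J(L), vertex set = join-irreducibles *)
Definition hasseJ : rel T := fun x y => coversJ x y || coversJ y x.

Definition has_cycle (e : rel T) : Prop :=
  exists s : seq T, [/\ 3 <= size s, uniq s & cycle e s]%N.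

Definition tree_lattice : Prop :=
  (forall x y : T, join_irr x -> join_irr y -> connect hasseJ x y) /\
  ~ has_cycle hasseJ.

Definition honest : Prop :=
  forall a b : T, join_irr a -> join_irr b -> coversJ a b -> covers a b.

End Defs.
Arguments tree_lattice {d} T.
Arguments honest {d} T.

(* Main.v *)
Require Import Defs.
From HB Require Import structures.
From mathcomp Require Import all_boot all_order.

Set Implicit Arguments. Unset Strict Implicit. Unset Printing Implicit Defensive.
Import Order.TTheory.

Section Aux.
Local Open Scope order_scope.
Context {d : Order.disp_t} {T : finTBDistrLatticeType d}.
Implicit Types x y z : T.

Definition nb x := #|[pred z : T | z < x]|.

Lemma nb_lt x y : x < y -> (nb x < nb y)%N.
Proof.
move=> lxy; apply: proper_card; apply/properP; split.
  by apply/subsetP => z; rewrite !inE => /lt_trans; apply.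
by exists x; rewrite !inE ?ltxx.
Qed.

Lemma nb_ind (P : T -> Prop) :
  (forall x, (forall y, y < x -> P y) -> P x) -> forall x, P x.
Proof.
move=> H x; move: {2}(nb x) (leqnn (nb x)) => n; elim: n x => [|n IH] x hx;
  apply: H => y /nb_lt lt.
  by move: (leq_trans lt hx).
by apply: IH; rewrite -ltnS; apply: leq_trans lt hx.
Qed.

Lemma exists_max (P : pred T) x0 : P x0 ->
  exists m, P m /\ forall z, P z -> ~~ (m < z).
Proof.
move=> P0; case: (@arg_maxnP T x0 P nb P0) => m Pm Hm.
exists m; split => // z Pz; apply/negP => /nb_lt; rewrite ltnNge.
by move/negP; apply; apply: Hm.
Qed.

Lemma bot_ji : join_irr (\bot : T).
Proof.
apply/forallP => y; apply/forallP => z; apply/implyP => /eqP H.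
have : y <= \bot by rewrite H leUl.
by rewrite lex0 eq_sym => ->.
Qed.

Lemma not_ji z : ~~ join_irr z ->
  exists y w, [/\ z = y `|` w, z != y & z != w].
Proof.
move/forallPn => [y /forallPn [w]]; rewrite negb_imply negb_or.
by move=> /andP[/eqP E /andP[n1 n2]]; exists y, w.
Qed.

Lemma ji_split z b : ~~ (z <= b) ->
  exists j, [/\ join_irr j, j <= z & ~~ (j <= b)].
Proof.
elim/nb_ind: z => z IH nzb; case: (boolP (join_irr z)) => jz; first by exists z.
have [y [w [E ny nw]]] := not_ji jz.
have lyz : y < z by rewrite lt_neqAle eq_sym ny E leUl.
have lwz : w < z by rewrite lt_neqAle eq_sym nw E leUr.
case: (boolP (y <= b)) => yb; last first.
  by have [j [jj jy jb]] := IH _ lyz yb; exists j; split => //; apply: le_trans jy (ltW lyz).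
case: (boolP (w <= b)) => wb; last first.
  by have [j [jj jy jb]] := IH _ lwz wb; exists j; split => //; apply: le_trans jy (ltW lwz).
by move: nzb; rewrite E leUx yb wb.
Qed.

Lemma covers_uniq x b1 b2 : join_irr x -> covers x b1 -> covers x b2 -> b1 = b2.
Proof.
move=> jx /andP[lt1 /forallP c1] /andP[lt2 /forallP c2].
case: (eqVneq b1 b2) => // ne.
have le : b1 `|` b2 <= x by rewrite leUx !ltW.
have lt1U : b1 < b1 `|` b2.
  rewrite lt_neqAle leUl andbT; apply/eqP => E.
  have : b2 < b1 by rewrite lt_neqAle eq_sym ne E leUr.
  by move=> h; move: (c2 b1); rewrite h lt1.
have Ex : x == b1 `|` b2.
  move: (c1 (b1 `|` b2)); rewrite lt1U /= => h.
  by move: le; rewrite le_eqVlt (negbTE h) orbF eq_sym.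
move: jx => /forallP /(_ b1) /forallP /(_ b2); rewrite Ex /= => /orP[] /eqP E.
  by move: lt1; rewrite E ltxx.
by move: lt2; rewrite E ltxx.
Qed.

Lemma jcover x y : join_irr x -> join_irr y -> y < x ->
  exists u, [/\ coversJ x u, y <= u & join_irr u].
Proof.
move=> jx jy lyx.
have P0 : [pred u | [&& join_irr u, y <= u & u < x]] y by rewrite /= jy lexx lyx.
have [u [/and3P[ju yu ux] Hu]] := exists_max P0.
exists u; split => //; rewrite /coversJ jx ju ux /=.
apply/forallP => z; apply/implyP => jz; apply/negP => /andP[uz zx].
by move: (Hu z); rewrite /= jz zx (le_trans yu (ltW uz)) uz => /(_ isT).
Qed.

Lemma down_chain x y : join_irr x -> join_irr y -> y < x ->
  exists q, path coversJ x (rcons q y) /\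
    all (fun u => [&& join_irr u, y < u & u < x]) q.
Proof.
elim/nb_ind: x => x IH jx jy lyx.
have [u [cxu yu ju]] := jcover jx jy lyx.
have ux : u < x by case/and4P: cxu.
case: (eqVneq u y) => [E|ne].
  by exists [::]; rewrite /= -E cxu.
have lyu : y < u by rewrite lt_neqAle eq_sym ne yu.
have [q [pq aq]] := IH u ux ju jy lyu.
exists (u :: q); rewrite /= cxu pq lyu ux ju /=; split => //.
apply/allP => v vq; move/allP: aq => /(_ v vq) /and3P[-> -> vu] /=.
exact: lt_trans vu ux.
Qed.

Lemma honest_acyclic : honest T -> ~ has_cycle (hasseJ (T:=T)).
Proof.
move=> H [s [sz us cs]].
have s0 : head \bot s \in s by case: s sz {us cs} => //= a s _; rewrite mem_head.
have [x [xs Hx]] := exists_max (P := fun z => z \in s) s0.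
have memt : forall z, z \in x :: (drop (index x s).+1 s ++ take (index x s) s) -> z \in s.
  by move=> z; rewrite -rot_index // mem_rot.
rewrite -(rot_cycle (index x s)) rot_index // in cs.
rewrite -(rot_uniq (index x s)) rot_index // in us.
rewrite -(size_rot (index x s)) rot_index // in sz.
move: memt cs us sz.
case: (drop _ _ ++ take _ _) => [|y [|t0 t]] //= memt.
move=> /and3P[hxy _]; rewrite rcons_path => /andP[_ hzx] /and3P[_ yt _] _.
have zt : last t0 t \in t0 :: t by apply: mem_last.
have ys : y \in s by apply: memt; rewrite !inE eqxx orbT.
have zs : last t0 t \in s by apply: memt; rewrite 2!in_cons zt !orbT.
have cxy : coversJ x y.
  case/orP: hxy => // /and4P[_ _ xy _].
  by move: (Hx y ys); rewrite xy.
have cxz : coversJ x (last t0 t).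
  case/orP: hzx => // /and4P[_ _ xz _].
  by move: (Hx _ zs); rewrite xz.
have jx : join_irr x by case/and4P: cxy.
have jy : join_irr y by case/and4P: cxy.
have jz : join_irr (last t0 t) by case/and4P: cxz.
have E := covers_uniq jx (H _ _ jx jy cxy) (H _ _ jx jz cxz).
by move: yt; rewrite E zt.
Qed.

Lemma connect_bot x : join_irr x -> connect (hasseJ (T:=T)) x \bot.
Proof.
elim/nb_ind: x => x IH jx; case: (eqVneq x \bot) => [->|nx]; first exact: connect0.
have lt : \bot < x by rewrite lt_neqAle eq_sym nx le0x.
have [u [c _ ju]] := jcover jx bot_ji lt.
have ux : u < x by case/and4P: c.
apply: connect_trans (connect1 _) (IH u ux ju).
by rewrite /hasseJ c.
Qed.

Lemma hasse_connected x y : join_irr x -> join_irr y -> connect (hasseJ (T:=T)) x y.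
Proof.
move=> jx jy; apply: connect_trans (connect_bot jx) _.
have sym : connect_sym (hasseJ (T:=T)).
  by apply: sym_connect_sym => u v; rewrite /hasseJ orbC.
by rewrite sym; apply: connect_bot.
Qed.

Lemma acyclic_honest : ~ has_cycle (hasseJ (T:=T)) -> honest T.
Proof.
move=> NC a b ja jb cab; rewrite /covers.
have ba : b < a by case/and4P: cab.
have cabf : forall z, join_irr z -> ~~ ((b < z) && (z < a)).
  by move=> z jz; case/and4P: cab => _ _ _ /forallP /(_ z); rewrite jz.
rewrite ba /=; apply/forallP => z; apply/negP => /andP[bz za].
have nzb : ~~ (z <= b) by rewrite lt_geF.
have [j [jj jz jb']] := ji_split nzb.
have ja' : j < a := le_lt_trans jz za.
have [c [cac jc' jc]] := jcover ja jj ja'.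
have ca : c < a by case/and4P: cac.
have ncb : ~~ (c <= b) by apply/negP => cb; move: jb'; rewrite (le_trans jc' cb).
have nbc : ~~ (b <= c).
  apply/negP => bc; case: (eqVneq b c) => [E|ne].
    by move: ncb; rewrite E lexx.
  by move: (cabf c jc); rewrite ca andbT lt_neqAle ne bc.
have P0 : [pred u | [&& join_irr u, u <= b & u <= c]] \bot by rewrite /= bot_ji !le0x.
have [m [/and3P[jm mb mc] Hm]] := exists_max P0.
have mb' : m < b.
  by rewrite lt_neqAle mb andbT; apply/eqP => E; move: nbc; rewrite -E mc.
have mc' : m < c.
  by rewrite lt_neqAle mc andbT; apply/eqP => E; move: ncb; rewrite -E mb.
have [qb [pb ab]] := down_chain jb jm mb'.
have [qc [pc ac]] := down_chain jc jm mc'.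
have pc' : path (fun u v => coversJ v u) m (rcons (rev qc) c).
  have := @rev_path T (fun u v => coversJ v u) c (rcons qc m).
  by rewrite last_rcons belast_rcons rev_cons => ->.
have Hbm : forall u, u \in rcons (b :: qb) m -> (u == m) || (u <= b).
  move=> u; rewrite mem_rcons !in_cons => /orP[->//|/orP[/eqP->|uq]].
    by rewrite lexx orbT.
  by move/allP: ab => /(_ u uq) /and3P[_ _ /ltW ->]; rewrite orbT.
have Hcm : forall u, u \in rcons (rev qc) c -> [&& join_irr u, m < u & u <= c].
  move=> u; rewrite mem_rcons in_cons mem_rev => /orP[/eqP->|uq].
    by rewrite jc mc' lexx.
  by move/allP: ac => /(_ u uq) /and3P[-> -> /ltW ->].
have sub1 : subrel coversJ (hasseJ (T:=T)) by move=> u v h; rewrite /hasseJ h.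
have sub2 : subrel (fun u v => coversJ v u) (hasseJ (T:=T)).
  by move=> u v h; rewrite /hasseJ h orbT.
have gt_tr : transitive (fun u v : T => v < u).
  by move=> u v w h1 h2; apply: lt_trans h2 h1.
have lt_tr : transitive (fun u v : T => u < v).
  by move=> u v w; apply: lt_trans.
have ub : uniq (rcons (b :: qb) m).
  apply: (sorted_uniq gt_tr); first by move=> u; rewrite /= ltxx.
  by apply: (sub_path _ pb) => u v /and4P[].
have uc : uniq (rcons (rev qc) c).
  have : uniq (m :: rcons (rev qc) c).
    apply: (sorted_uniq lt_tr); first by move=> u; rewrite /= ltxx.
    by apply: (sub_path _ pc') => u v /and4P[].
  by rewrite cons_uniq => /andP[].
apply: NC; exists (a :: rcons (b :: qb) m ++ rcons (rev qc) c); split.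
- by rewrite /= size_cat !size_rcons /= addSn.
- rewrite cons_uniq cat_uniq ub uc mem_cat negb_or /=; rewrite andbT -andbA; apply/and3P; split.
  + apply/negP => /Hbm /orP[/eqP E|ab'].
      by move: (lt_trans mb' ba); rewrite E ltxx.
    by move: ab'; rewrite lt_geF.
  + apply/negP => /Hcm /and3P[_ _ ac'].
    by move: ac'; rewrite lt_geF.
  + apply/hasPn => u /Hcm /and3P[ju mu uc']; apply/negP => /Hbm /orP[/eqP E|ub'].
      by move: mu; rewrite E ltxx.
    by move: (Hm u); rewrite /= ju ub' uc' mu => /(_ isT).
- rewrite /=; apply/andP; split; first by rewrite /hasseJ cab.
  rewrite rcons_cat cat_path last_rcons [path _ m _]rcons_path last_rcons; apply/and3P; split.
  + exact: sub_path sub1 _ _ pb.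
  + exact: sub_path sub2 _ _ pc'.
  + by rewrite /hasseJ cac orbT.
Qed.

End Aux.
Unset Implicit Arguments.

Theorem mainTheorem4 (d : Order.disp_t) (L : finTBDistrLatticeType d) :
  tree_lattice L <-> honest L.
Proof.
split.
  by move=> [_ NC]; apply: acyclic_honest.
move=> H; split; first by move=> x y; apply: hasse_connected.
exact: honest_acyclic.
Qed.
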